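(* Let $R$ be a finite local ring and let $\phi,\psi$ be non-trivial additive characters of $R$. (i) If $\phi$ and $\psi$ have different conductors, then $K(\phi,\psi)=0$. (ii) If $\phi$ and $\psi$ both have conductor $I$, then $K(\phi,\psi)=|I|\,K(\phi',\psi')$, where $\phi',\psi'$ are the primitive characters of $R/I$ inducing $\phi,\psi$, and $K(\phi',\psi')$ is the Kloosterman sum over $R/I$.
   Context: All rings are finite and commutative with identity; $S^\times$ is the unit group of a ring $S$. An additive character is a homomorphism $(S,+)\to\mathbb{C}^*$; its conductor is the largest ideal on which it is identically $1$; it is primitive if its conductor is $(0)$. A character of $R$ with conductor $I$ factors through a primitive character of $R/I$. The Kloosterman sum over $S$ is $K(\phi,\psi)=\sum_{u\in S^\times}\phi(u)\psi(u^{-1})$. *)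

(* Defs.v *)
From HB Require Import structures.
From mathcomp Require Import all_boot all_order all_algebra all_field.
Set Implicit Arguments. Unset Strict Implicit. Unset Printing Implicit Defensive.
Import Order.TTheory GRing.Theory Num.Theory.
Local Open Scope ring_scope.

Definition is_ideal (R : finComUnitRingType) (I : {set R}) : Prop :=
  [/\ 0 \in I,
      (forall x y, x \in I -> y \in I -> x - y \in I) &
      (forall r x, x \in I -> r * x \in I)].

Definition maximal_ideal (R : finComUnitRingType) (M : {set R}) : Prop :=
  [/\ is_ideal M, M != [set: R] &
      forall N : {set R}, is_ideal N -> M \subset N -> N = M \/ N = [set: R]].

Definition local_ring (R : finComUnitRingType) : Prop :=
  exists M : {set R}, maximal_ideal M /\
    forall N : {set R}, maximal_ideal N -> N = M.

Definition additive_char (R : finComUnitRingType) (phi : R -> algC) : Prop :=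
  (forall x, phi x != 0) /\ (forall x y, phi (x + y) = phi x * phi y).

Definition nontrivial_char (R : finComUnitRingType) (phi : R -> algC) : Prop :=
  exists x, phi x != 1.

Definition is_conductor (R : finComUnitRingType) (phi : R -> algC) (I : {set R})
  : Prop :=
  [/\ is_ideal I, (forall x, x \in I -> phi x = 1) &
      forall J : {set R}, is_ideal J -> (forall x, x \in J -> phi x = 1) ->
        J \subset I].

Definition primitive_char (R : finComUnitRingType) (phi : R -> algC) : Prop :=
  is_conductor phi [set 0].

Definition kloosterman (R : finComUnitRingType) (phi psi : R -> algC) : algC :=
  \sum_(u : R | u \is a GRing.unit) phi u * psi u^-1.

(* Main.v *)
Require Import Defs.
From HB Require Import structures.
From mathcomp Require Import all_boot all_order all_algebra all_field.
Import Order.TTheory GRing.Theory Num.Theory.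
Local Open Scope ring_scope.
Set Implicit Arguments. Unset Strict Implicit.

Section Aux.
Variable R : finComUnitRingType.
Implicit Types I N M : {set R}.

Definition idealb I := [&& 0 \in I,
  [forall x, forall y, (x \in I) ==> (y \in I) ==> (x - y \in I)] &
  [forall r, forall x, (x \in I) ==> (r * x \in I)]].

Lemma idealP I : reflect (is_ideal I) (idealb I).
Proof.
apply: (iffP and3P) => [[H0 /forallP H1 /forallP H2]|[H0 H1 H2]]; split => //.
- by move=> x y xI yI; move: (H1 x) => /forallP /(_ y); rewrite xI yI.
- by move=> r x xI; move: (H2 r) => /forallP /(_ x); rewrite xI.
- by apply/forallP => x; apply/forallP => y; apply/implyP => ?; apply/implyP => ?; apply: H1.
- by apply/forallP => r; apply/forallP => x; apply/implyP => ?; apply: H2.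
Qed.

Lemma ideal_add I x y : is_ideal I -> x \in I -> y \in I -> x + y \in I.
Proof.
move=> [] H0 H1 H2 xI yI; rewrite -[y]opprK; apply: (H1) => //.
by rewrite -sub0r; apply: H1.
Qed.

Lemma ideal_one I : is_ideal I -> 1 \in I -> I = setT.
Proof.
move=> [] _ _ H2 I1; apply/setP => r; rewrite inE; by rewrite -[r]mulr1 H2.
Qed.

Lemma exists_max N : is_ideal N -> N != setT ->
  exists M, maximal_ideal M /\ N \subset M.
Proof.
move=> iN nT.
pose P := fun K : {set R} => [&& idealb K, K != setT & N \subset K].
have PN : P N by rewrite /P nT subxx /= andbT; apply/idealP.
case: (@arg_maxnP _ N P (fun K : {set R} => #|K|) PN) => K PK Kmax; move: PK; rewrite /P => /and3P[/idealP iK KT NK].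
exists K; split => //; split => // N' iN' KN'.
case: (eqVneq N' setT) => [->|N'T]; [by right|left].
apply/eqP; rewrite eq_sym eqEcard KN' /=; apply: Kmax.
by rewrite /P N'T (subset_trans NK KN') /= andbT; apply/idealP.
Qed.

Lemma local_sub : local_ring R -> exists M, is_ideal M /\ M != setT /\
  forall N, is_ideal N -> N != setT -> N \subset M.
Proof.
case=> M [[iM MT _] uM]; exists M; do 2!split => //.
by move=> N iN NT; case: (exists_max iN NT) => M' [/uM -> ].
Qed.

Lemma unit_1p I b : local_ring R -> is_ideal I -> I != setT -> b \in I ->
  1 + b \is a GRing.unit.
Proof.
move=> /local_sub [M [iM [MT sub]]] iI IT bI.
apply/negPn/negP => nu.
pose J := [set (1 + b) * r | r : R].
have iJ : is_ideal J.
  split.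
  - by apply/imsetP; exists 0 => //; rewrite mulr0.
  - move=> x y /imsetP[r _ ->] /imsetP[s _ ->]; apply/imsetP; exists (r - s) => //.
    by rewrite mulrBr.
  - move=> r x /imsetP[s _ ->]; apply/imsetP; exists (r * s) => //.
    by rewrite mulrCA.
have JT : J != setT.
  apply/negP => /eqP JT; have : (1 : R) \in J by rewrite JT inE.
  case/imsetP => r _ /esym h; move/negP: nu; apply; apply/unitrP; exists r.
  by rewrite mulrC h.
have bM : b \in M by apply: (subsetP (sub _ iI IT)).
have cM : 1 + b \in M.
  by apply: (subsetP (sub _ iJ JT)); apply/imsetP; exists 1; rewrite ?mulr1.
case: iM => H0 H1 H2.
have : (1 + b) - b \in M by apply: H1.
rewrite addrK => /(ideal_one (And3 H0 H1 H2)) /eqP.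
by rewrite (negbTE MT).
Qed.

End Aux.
Section Part1.
Variable R : finComUnitRingType.

Lemma char0 (phi : R -> algC) : additive_char phi -> phi 0 = 1.
Proof.
case=> nz hom; have := hom 0 0; rewrite addr0 => h.
apply: (mulfI (nz 0)); by rewrite mulr1 -h.
Qed.

Lemma sum_ideal_mul (psi : R -> algC) (I : {set R}) w :
  is_ideal I -> w \is a GRing.unit ->
  \sum_(b in I) psi (b * w) = \sum_(b in I) psi b.
Proof.
move=> iI wU; rewrite [RHS](reindex_inj (h := fun b => b * w)) /=; last first.
  exact: mulIr.
apply: eq_bigl => b; apply/idP/idP => H.
  by rewrite mulrC; case: iI => _ _ ->.
by rewrite -(mulrK wU b) mulrC; case: iI => _ _ ->.
Qed.

Lemma sum_ideal_zero (psi : R -> algC) (I : {set R}) c :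
  additive_char psi -> is_ideal I -> c \in I -> psi c != 1 ->
  \sum_(b in I) psi b = 0.
Proof.
move=> [nz hom] iI cI pc.
have : psi c * \sum_(b in I) psi b = \sum_(b in I) psi b.
  rewrite big_distrr /= [RHS](reindex_inj (h := fun b => c + b)) /=; last first.
    exact: addrI.
  apply: eq_big => b; last by move=> _; rewrite hom.
  apply/idP/idP => H; first by apply: ideal_add.
  rewrite -(addKr c b); apply: ideal_add => //.
  by case: iI => H0 H1 _; rewrite -sub0r; apply: H1.
move/eqP; rewrite -subr_eq0 -{2}[\sum_(b in I) psi b]mul1r -mulrBl mulf_eq0.
by rewrite subr_eq0 (negbTE pc) => /eqP.
Qed.

Lemma kl_zero (phi psi : R -> algC) (I : {set R}) c :
  local_ring R -> additive_char phi -> additive_char psi ->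
  is_ideal I -> I != setT -> (forall x, x \in I -> phi x = 1) ->
  c \in I -> psi c != 1 -> kloosterman phi psi = 0.
Proof.
move=> loc Aphi Apsi iI IT phiI cI pc.
have [_ homphi] := Aphi; have [_ hompsi] := Apsi.
have step : forall b, b \in I -> kloosterman phi psi =
   \sum_(u | u \is a GRing.unit) (phi u * psi u^-1 * psi (b * u^-1)).
  move=> b bI.
  have aU : 1 + b \is a GRing.unit by apply: (unit_1p loc iI IT bI).
  rewrite /kloosterman (reindex_inj (h := fun u => u * (1 + b)^-1)) /=; last first.
    by apply: mulIr; rewrite unitrV.
  apply: eq_big => u; first by rewrite unitrMl // unitrV.
  rewrite unitrMl ?unitrV // => uU.
  have E : u * (1 + b)^-1 = u + (- (u * (1 + b)^-1)) * b.
    by rewrite -{2}(divrK aU u) mulrDr mulr1 mulNr addrK.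
  rewrite {1}E.
  have dI : - (u * (1 + b)^-1) * b \in I by case: iI => _ _ ->.
  rewrite homphi (phiI _ dI).
  rewrite mulr1 invrM ?unitrV // invrK mulrDl mul1r hompsi.
  by rewrite mulrA.
have : kloosterman phi psi *+ #|I| = 0.
  rewrite -sumr_const (eq_bigr _ step) exchange_big /=.
  rewrite (eq_bigr (fun u => 0)) ?big1 // => u uU.
  rewrite -big_distrr /= sum_ideal_mul ?unitrV //.
  by rewrite (sum_ideal_zero Apsi iI cI pc) mulr0.
move/eqP; rewrite mulrn_eq0 => /orP[|/eqP //].
by move/eqP/card0_eq/(_ c); rewrite cI.
Qed.

Lemma kl_sym (phi psi : R -> algC) : kloosterman phi psi = kloosterman psi phi.
Proof.
rewrite /kloosterman (reindex_inj (h := GRing.inv)) /=; last exact: invr_inj.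
apply: eq_big => u; first by rewrite unitrV.
by rewrite invrK mulrC.
Qed.

End Part1.
Lemma kl_quot (R S : finComUnitRingType) (phi psi : R -> algC) (phi' psi' : S -> algC)
  (I : {set R}) (f : {rmorphism R -> S}) :
  local_ring R -> is_ideal I -> I != setT ->
  (forall y : S, exists x : R, f x = y) -> [set x : R | f x == 0] = I ->
  (forall x, phi x = phi' (f x)) -> (forall x, psi x = psi' (f x)) ->
  kloosterman phi psi = (#|I|)%:R * kloosterman phi' psi'.
Proof.
move=> loc iI IT surj kerI ephi epsi.
have unit_lift : forall x, f x \is a GRing.unit -> x \is a GRing.unit.
  move=> x /unitrP [y' [_ h]]; have [y fy] := surj y'.
  have d : x * y - 1 \in I by rewrite -kerI inE rmorphB rmorphM rmorph1 fy h subrr.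
  have := unit_1p loc iI IT d; rewrite addrC subrK unitrM => /andP[] //.
rewrite /kloosterman.
rewrite (eq_bigr (fun u => phi' (f u) * psi' (f u)^-1)); last first.
  by move=> u uU; rewrite ephi epsi rmorphV.
rewrite (partition_big f (fun v => v \is a GRing.unit)) /=; last first.
  by move=> u uU; rewrite rmorph_unit.
rewrite mulr_natl -sumrMnl; apply: eq_bigr => v vU.
have [x fx] := surj v.
rewrite (eq_bigr (fun _ => phi' v * psi' v^-1)); last by move=> u /andP[_ /eqP ->].
rewrite (eq_bigl (fun u => u \in [set u | f u == v])); last first.
  move=> u; rewrite inE; apply/andP/idP => [[]//|/eqP fu]; split; last by rewrite fu.
  by apply: unit_lift; rewrite fu.
rewrite sumr_const; congr (_ *+ _).
have -> : [set u | f u == v] = [set x + b | b in I].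
  apply/setP => u; rewrite inE; apply/eqP/imsetP => [fu|[b bI ->]].
    exists (u - x); last by rewrite addrC subrK.
    by rewrite -kerI inE rmorphB fu fx subrr.
  by move: bI; rewrite -kerI inE rmorphD fx => /eqP ->; rewrite addr0.
by rewrite card_imset //; apply: addrI.
Qed.

Unset Implicit Arguments. Set Strict Implicit.

Theorem mainTheorem14 (R : finComUnitRingType) (phi psi : R -> algC) :
  local_ring R ->
  additive_char phi -> additive_char psi ->
  nontrivial_char phi -> nontrivial_char psi ->
  (* (i) different conductors *)
  (forall I J : {set R}, is_conductor phi I -> is_conductor psi J -> I != J ->
     kloosterman phi psi = 0) /\
  (* (ii) same conductor I; R/I is represented by any ring S with a
     surjective ring morphism f : R -> S of kernel I *)
  (forall I : {set R}, is_conductor phi I -> is_conductor psi I ->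
   forall (S : finComUnitRingType) (f : {rmorphism R -> S}),
     (forall y : S, exists x : R, f x = y) ->
     [set x : R | f x == 0] = I ->
   forall phi' psi' : S -> algC,
     additive_char phi' -> additive_char psi' ->
     primitive_char phi' -> primitive_char psi' ->
     (forall x, phi x = phi' (f x)) -> (forall x, psi x = psi' (f x)) ->
     kloosterman phi psi = (#|I|)%:R * kloosterman phi' psi').
Proof.
move=> loc Aphi Apsi [x0 nx0] [y0 ny0].
have proper : forall (ch : R -> algC) I z, is_conductor ch I -> ch z != 1 -> I != setT.
  move=> ch I z [_ h _] nz; apply/negP => /eqP IT; move/negP: nz; apply.
  by rewrite h // IT inE.
split.
  move=> I J cI cJ IJ.
  have [iI phiI maxI] := cI; have [iJ psiJ maxJ] := cJ.
  case: (boolP (I \subset J)) => IsJ.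
    have JsI : ~~ (J \subset I).
      by apply: contra IJ => JsI; rewrite eqEsubset IsJ JsI.
    have [c cJ' pc] : exists2 c, c \in J & phi c != 1.
      apply/exists_inP; apply: contraR JsI => /exists_inPn h.
      by apply: maxI => // z /h /negPn /eqP.
    rewrite kl_sym; exact: (kl_zero loc Apsi Aphi iJ (proper _ _ _ cJ ny0) psiJ cJ' pc).
  have [c cI' pc] : exists2 c, c \in I & psi c != 1.
    apply/exists_inP; apply: contraR IsJ => /exists_inPn h.
    by apply: maxJ => // z /h /negPn /eqP.
  exact: (kl_zero loc Aphi Apsi iI (proper _ _ _ cI nx0) phiI cI' pc).
move=> I cI _ S f surj kerI phi' psi' _ _ _ _ ephi epsi.
have [iI _ _] := cI.
exact: (kl_quot loc iI (proper _ _ _ cI nx0) surj kerI ephi epsi).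
Qed.
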